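(* Let $(X,\delta,c)$ be an accepting automaton over $\Sigma$ and let $\mu\mathrm{PL}(\delta,c)$ be as in the context. Then $\mu\mathrm{PL}(\delta,c)$ is isomorphic to the smallest preformation of languages containing $\{L(x,c)\mid x\in X\}$, where $L(x,c)=\{u\in\Sigma^\ast\mid\delta(x)(u)\in c\}$; that is, the set $\{L(\mathcal{U})\mid\mathcal{U}\in P(\Sigma^\ast/{\approx})\}$ is the smallest preformation of languages containing all $L(x,c)$, $x\in X$.
   Context: $\Sigma$ is a finite alphabet, $\Sigma^\ast$ the free monoid with empty word $\epsilon$, $u^r$ the reversal of $u$. An accepting automaton is $(X,\delta,c)$ with $\delta:X\to X^\Sigma$ (extended to words by $\delta(x)(\epsilon)=x$, $\delta(x)(wa)=\delta(\delta(x)(w))(a)$) and $c\subseteq X$. Define $\widehat{\delta}(U)(a)=\{x\mid\delta(x)(a)\in U\}$ for $U\subseteq X$, extended to words, so $\widehat{\delta}(U)(w)=\{x\mid\delta(x)(w^r)\in U\}$. Let $\langle c\rangle=\{\widehat{\delta}(c)(w)\mid w\in\Sigma^\ast\}$ and $u\approx v$ iff $\widehat{\delta}(U)(u)=\widehat{\delta}(U)(v)$ for all $U\in\langle c\rangle$. $\mu\mathrm{PL}(\delta,c)$ has state space $P(\Sigma^\ast/{\approx})$, transition $\widehat{\sigma}(\mathcal{U})(u)=\{[w]\mid[wu^r]\in\mathcal{U}\}$ and final states $\{\mathcal{U}\mid[\epsilon]\in\mathcal{U}\}$; $L(\mathcal{U})=\{u\mid[\epsilon]\in\widehat{\sigma}(\mathcal{U})(u)\}$.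 A preformation of languages is a complete atomic Boolean subalgebra of $2^{\Sigma^\ast}$ closed under left derivatives $U\mapsto\{w\mid aw\in U\}$ and right derivatives $U\mapsto\{w\mid wa\in U\}$, $a\in\Sigma$. *)

(* Defs.v *)
From mathcomp Require Import all_boot.
From mathcomp Require Import boolp classical_sets.
Set Implicit Arguments. Unset Strict Implicit. Unset Printing Implicit Defensive.
Local Open Scope classical_set_scope.

Section Automata.
Variables (A : finType) (X : Type) (delta : X -> A -> X) (c : set X).

Definition delta_star (x : X) (w : seq A) : X := foldl delta x w.

Definition deltahat1 (U : set X) (a : A) : set X := [set x | U (delta x a)].

Definition deltahat (U : set X) (w : seq A) : set X := foldl deltahat1 U w.

Definition gen_c : set (set X) := [set V | exists w, V = deltahat c w].

Definition approx (u v : seq A) : Prop :=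
  forall U, gen_c U -> deltahat U u = deltahat U v.

Definition cls (w : seq A) : set (seq A) := [set v | approx w v].

Definition quot : set (set (seq A)) := [set C | exists w, C = cls w].

(* states of muPL(delta,c): subsets 𝒰 of Sigma^*/~, i.e. 𝒰 `<=` quot *)
Definition sigmahat (U : set (set (seq A))) (u : seq A) : set (set (seq A)) :=
  [set C | exists w, C = cls w /\ U (cls (w ++ rev u))].

Definition LU (U : set (set (seq A))) : set (seq A) :=
  [set u | sigmahat U u (cls [::])].

Definition Lxc (x : X) : set (seq A) := [set u | c (delta_star x u)].

End Automata.

Definition preformation (A : Type) (F : set (set (seq A))) : Prop :=
  [/\
      (forall U, F U -> F (~` U)),
      (forall G : set (set (seq A)), G `<=` F -> F (\bigcup_(U in G) U)),
      (forall G : set (set (seq A)), G `<=` F -> F (\bigcap_(U in G) U)),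
      (forall U, F U -> U <> set0 ->
         exists a, [/\ F a, a <> set0, a `<=` U &
                      forall b, F b -> b `<=` a -> b = set0 \/ b = a]) &
      (forall U (a : A), F U ->
         F [set w | U (a :: w)] /\ F [set w | U (rcons w a)])].

(* Main.v *)
Require Import Defs.
From mathcomp Require Import all_boot.
From mathcomp Require Import boolp classical_sets.
Local Open Scope classical_set_scope.

Set Implicit Arguments.
Section Aux.
Variables (A : finType) (X : Type) (delta : X -> A -> X) (c : set X).

Definition RR (u v : seq A) : Prop :=
  forall x z, c (delta_star delta x (u ++ z)) <-> c (delta_star delta x (v ++ z)).

Lemma RR_refl u : RR u u. Proof. by move=> x z. Qed.
Lemma RR_sym u v : RR u v -> RR v u. Proof. by move=> H x z; split => /H. Qed.
Lemma RR_trans u v w : RR u v -> RR v w -> RR u w.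
Proof. by move=> H1 H2 x z; split => [/H1/H2|/H2/H1]. Qed.

Lemma ds_cat x p w : delta_star delta x (p ++ w) = delta_star delta (delta_star delta x p) w.
Proof. by rewrite /delta_star foldl_cat. Qed.

Lemma RR_left p u v : RR u v -> RR (p ++ u) (p ++ v).
Proof. move=> H x z; rewrite -!catA (ds_cat x p (u ++ z)) (ds_cat x p (v ++ z)); exact: H. Qed.

Lemma RR_right a u v : RR u v -> RR (rcons u a) (rcons v a).
Proof. by move=> H x z; rewrite !cat_rcons; apply: H. Qed.

Lemma deltahatE U w :
  deltahat delta U w = [set x | U (delta_star delta x (rev w))].
Proof.
elim: w U => [|a w IH] U /=; first by [].
rewrite /deltahat /= -/(deltahat delta _ w) IH.
apply/funext => x /=; rewrite rev_cons /delta_star -cats1 foldl_cat /=.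
by [].
Qed.

Lemma approxE u v : approx delta c u v <-> RR (rev u) (rev v).
Proof.
split.
- move=> H x z.
  have := H (deltahat delta c (rev z)) (ex_intro _ (rev z) erefl).
  rewrite !deltahatE => /(congr1 (fun S => S x)) /=.
  by rewrite revK -!ds_cat => ->.
- move=> H U [w ->]; rewrite !deltahatE; apply/funext => x /=.
  rewrite -!ds_cat; apply/propext; exact: H.
Qed.

Lemma clsE u v : cls delta c u = cls delta c v <-> RR (rev u) (rev v).
Proof.
split.
- move=> H; have : cls delta c v v by apply/approxE; exact: RR_refl.
  by rewrite -H => /approxE.
- move=> H; apply/funext => w /=; apply/propext; split => /approxE H'; apply/approxE.
  + exact: RR_trans (RR_sym H) H'.
  + exact: RR_trans H H'.
Qed.

Lemma LUE U u : LU delta c U u <-> U (cls delta c (rev u)).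
Proof.
split.
- move=> [w [/esym /clsE /= Hw HU]].
  suff -> : cls delta c (rev u) = cls delta c (w ++ rev u) by [].
  apply/clsE; rewrite revK rev_cat revK.
  have := RR_left u Hw; rewrite cats0; exact: RR_sym.
- by move=> HU; exists [::]; split.
Qed.

Definition sat (L : set (seq A)) := forall u v, RR u v -> L u -> L v.

Lemma PE : [set L | exists U, U `<=` quot delta c /\ L = LU delta c U] = sat.
Proof.
apply/funext => L; apply/propext; split.
- move=> [U [_ ->]] u v H /LUE HU; apply/LUE.
  suff <- : cls delta c (rev u) = cls delta c (rev v) by [].
  by apply/clsE; rewrite !revK.
- move=> HL; exists [set C | exists u, L u /\ C = cls delta c (rev u)]; split.
  + by move=> C [u [_ ->]]; exists (rev u).
  + apply/funext => v; apply/propext; split.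
    * by move=> Lv; apply/LUE; exists v.
    * move/LUE => [u [Lu /clsE]]; rewrite !revK => H.
      exact: HL (RR_sym H) Lu.
Qed.

Lemma sat_pre : preformation sat.
Proof.
split.
- move=> U HU u v H nu Uv; apply: nu; exact: HU (RR_sym H) Uv.
- move=> G HG u v H [K GK Ku]; exists K => //; exact: HG GK _ _ H Ku.
- move=> G HG u v H HK K GK; exact: HG GK _ _ H (HK K GK).
- move=> U HU U0.
  have [u Uu] : exists u, U u.
    apply: contrapT => nE; apply: U0; apply/funext => w; apply/propext; split => //.
    by move=> Uw; apply: nE; exists w.
  exists [set v | RR u v]; split.
  + move=> v w H /= H'; exact: RR_trans H' H.
  + by move/(congr1 (fun S => S u)) => /= <-; exact: RR_refl.
  + by move=> v /= H; exact: HU H Uu.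
  + move=> b Hb sb; case: (pselect (b = set0)) => [->|nb]; [by left|right].
    have [v bv] : exists v, b v.
      apply: contrapT => nE; apply: nb; apply/funext => w; apply/propext; split => //.
      by move=> bw; apply: nE; exists w.
    apply/funext => w; apply/propext; split; first by move/sb.
    move=> /= Hw; apply: (Hb v w _ bv); exact: RR_trans (RR_sym (sb v bv)) Hw.
- move=> U a HU; split.
  + move=> u v H /=; apply: HU; exact: (RR_left [:: a] H).
  + move=> u v H /=; apply: HU; exact: RR_right.
Qed.

Lemma Lxc_sat x : sat (Lxc delta c x).
Proof. by move=> u v H /=; have := H x [::]; rewrite !cats0 => -[]. Qed.

Lemma F_suffix (F : set (set (seq A))) : preformation F ->
  forall z L, F L -> F [set v | L (v ++ z)].
Proof.
move=> [_ _ _ _ Hd] z; elim: z => [|a z IH] L FL.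
- by have -> : [set v | L (v ++ [::])] = L by apply/funext => v /=; rewrite cats0.
- have := (Hd _ a (IH L FL)).2.
  suff -> : [set v | L (v ++ a :: z)] = [set w | [set v | L (v ++ z)] (rcons w a)] by [].
  by apply/funext => v /=; rewrite cat_rcons.
Qed.

Lemma sat_min (F : set (set (seq A))) : preformation F ->
  (forall x, F (Lxc delta c x)) -> sat `<=` F.
Proof.
move=> HF HL L sL.
have Fcl : forall u, F [set v | RR u v].
  move=> u.
  pose D x z := [set v | c (delta_star delta x (v ++ z))].
  pose H := [set K | exists x z, K = if pselect (c (delta_star delta x (u ++ z)))
                                    then D x z else ~` D x z].
  have -> : [set v | RR u v] = \bigcap_(K in H) K.
    apply/funext => v; apply/propext; split.
    - move=> Huv K [x [z ->]]; case: pselect => cu.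
      + by rewrite /D /=; apply/(Huv x z).
      + by rewrite /D /= => cv; apply: cu; apply/(Huv x z).
    - move=> Hv x z; have := Hv _ (ex_intro _ x (ex_intro _ z erefl)).
      case: pselect => cu /= cv; tauto.
  have FS := F_suffix HF.
  case: HF => [Hc Hu Hi Ha Hd]; apply: Hi => K [x [z ->]].
  have FD : F (D x z) by exact: (FS z _ (HL x)).
  by case: pselect => ?; [|apply: Hc].
have -> : L = \bigcup_(K in [set K | exists u, L u /\ K = [set v | RR u v]]) K.
  apply/funext => v; apply/propext; split.
  - move=> Lv; exists [set w | RR v w]; first by exists v.
    exact: RR_refl.
  - by move=> [K [u [Lu ->]]] /= H; exact: sL H Lu.
case: HF => [Hc Hu Hi Ha Hd]; apply: Hu => K [u [_ ->]]; exact: Fcl.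
Qed.

End Aux.

Theorem mainTheorem8 (A : finType) (X : Type) (delta : X -> A -> X) (c : set X) :
  let P := [set L | exists U, U `<=` quot delta c /\ L = LU delta c U] in
  [/\ preformation P,
      (forall x : X, P (Lxc delta c x)) &
      (forall F : set (set (seq A)),
         preformation F -> (forall x : X, F (Lxc delta c x)) -> P `<=` F)].
Proof.
move=> P; rewrite /P PE; split.
- exact: sat_pre.
- exact: Lxc_sat.
- exact: sat_min.
Qed.
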